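(* Let $0<\lambda\leq\Lambda$ and let $F:\mathcal{S}(d)\to\mathbb{R}$ satisfy \[ \lambda\|N\|\leq F(M+N)-F(M)\leq \Lambda\|N\|\quad\text{for all } M,N\in\mathcal{S}(d),\ N\geq 0, \] and $F(0)=0$. Suppose the recession profile $F^*(M):=\lim_{\mu\to 0}\mu F(\mu^{-1}M)$ is convex. For $\varepsilon>0$ let $F_\varepsilon(M):=\int_{\mathbb{R}^{d^*}}F(M-Q)\eta_\varepsilon(Q)\,dQ$. Then for every $\varepsilon>0$ the recession profile $(F_\varepsilon)^*(M):=\lim_{\mu\to 0}\mu F_\varepsilon(\mu^{-1}M)$ is convex.
   Context: $\mathcal{S}(d)$ is the space of real symmetric $d\times d$ matrices, identified with $\mathbb{R}^{d^*}$, $d^*:=d(d+1)/2$; $\|\cdot\|$ is a matrix norm; $N\geq 0$ means positive semidefinite. $(\eta_\varepsilon)_{\varepsilon>0}\subset\mathcal{C}^\infty(\mathbb{R}^{d^*})$ is a family of standard mollifiers. The recession profile of an operator $G$ is $G^*(M)=\lim_{\mu\to0}\mu G(\mu^{-1}M)$. *)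

(* Defs.v *)
From HB Require Import structures.
From mathcomp Require Import all_boot all_order all_algebra.
From mathcomp Require Import all_classical all_reals all_analysis.
Set Implicit Arguments. Unset Strict Implicit. Unset Printing Implicit Defensive.
Import Order.TTheory GRing.Theory Num.Theory.
Import numFieldNormedType.Exports.
Local Open Scope ring_scope.
Local Open Scope classical_set_scope.

Section Defs.
Variables (R : realType) (d : nat).

Definition sym_mx (A : 'M[R]_d) : Prop := A^T = A.

Definition psd (N : 'M[R]_d) : Prop :=
  sym_mx N /\ forall v : 'cV[R]_d, 0 <= (v^T *m N *m v) 0 0.

Definition is_matrix_norm (nrm : 'M[R]_d -> R) : Prop :=
  [/\ forall A, 0 <= nrm A,
      forall A, nrm A = 0 -> A = 0,
      forall (a : R) A, nrm (a *: A) = `|a| * nrm A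
    & forall A B, nrm (A + B) <= nrm A + nrm B].

Definition convex_on_sym (G : 'M[R]_d -> R) : Prop :=
  forall A B (t : R), sym_mx A -> sym_mx B -> 0 <= t <= 1 ->
    G (t *: A + (1 - t) *: B) <= t * G A + (1 - t) * G B.

Definition recession_limit (G : 'M[R]_d -> R) (M : 'M[R]_d) (L : R) : Prop :=
  (mu * G (mu^-1 *: M)) @[mu --> (0:R)^'+] --> L.

Definition recession_profile_convex (G : 'M[R]_d -> R) : Prop :=
  exists Gs : 'M[R]_d -> R,
    (forall M, sym_mx M -> recession_limit G M (Gs M)) /\ convex_on_sym Gs.

(* Identification S(d) = R^{d*}: coordinates are the upper-triangular
   entries (i,j), i <= j; there are d(d+1)/2 of them. *)
Definition coords : seq ('I_d * 'I_d) :=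
  seq.filter (fun p : 'I_d * 'I_d => (nat_of_ord p.1 <= nat_of_ord p.2)%N) (enum [set: ('I_d * 'I_d)%type]).

Definition sym_of (c : 'I_d * 'I_d -> R) : 'M[R]_d :=
  \matrix_(i, j) (if (i <= j)%N then c (i, j) else c (j, i)).

Definition enorm (c : 'I_d * 'I_d -> R) : R :=
  Num.sqrt (\sum_(p <- coords) c p ^+ 2).

Definition upd (c : 'I_d * 'I_d -> R) (p : 'I_d * 'I_d) (x : R) :=
  fun q => if q == p then x else c q.

Fixpoint iint (s : seq ('I_d * 'I_d)) (f : ('I_d * 'I_d -> R) -> R)
    (c : 'I_d * 'I_d -> R) : R :=
  match s with
  | [::] => f c
  | p :: s' => (\int[@lebesgue_measure R]_(x in setT) iint s' f (upd c p x))%R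
  end.

Definition integral_Rdstar (f : ('I_d * 'I_d -> R) -> R) : R :=
  iint coords f (fun _ => 0).

Definition phi_std (c : 'I_d * 'I_d -> R) : R :=
  if enorm c < 1 then expR ((enorm c ^+ 2 - 1)^-1) else 0.

Definition eta_std (c : 'I_d * 'I_d -> R) : R :=
  phi_std c / integral_Rdstar phi_std.

Definition eta (eps : R) (c : 'I_d * 'I_d -> R) : R :=
  (eps ^+ size coords)^-1 * eta_std (fun p => c p / eps).

Definition mollify (F : 'M[R]_d -> R) (eps : R) (M : 'M[R]_d) : R :=
  integral_Rdstar (fun c => F (M - sym_of c) * eta eps c).

End Defs.

(* Main.v *)
Require Import Defs.
From HB Require Import structures.
From mathcomp Require Import all_boot all_order all_algebra.
From mathcomp Require Import all_classical all_reals all_analysis.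
From mathcomp Require Import lra ring.
Import Order.TTheory GRing.Theory Num.Theory.
Import numFieldNormedType.Exports.
Local Open Scope ring_scope.

Section IntLemmas.
Import HBNNSimple.
Local Open Scope classical_set_scope.
Variable R : realType.
Local Notation mu := (@lebesgue_measure R).

Lemma nn_mono (f g : R -> \bar R) : (forall x, (0 <= f x)%E) ->
  (forall x, (f x <= g x)%E) ->
  (\int[mu]_(x in setT) f x <= \int[mu]_(x in setT) g x)%E.
Proof.
move=> f0 fg.
have g0 : forall x, (0 <= g x)%E by move=> x; exact: le_trans (f0 x) (fg x).
rewrite (ge0_integralTE mu f0) (ge0_integralTE mu g0) /=.
apply: ereal_sup_le => _ [h hf <-]; exists h => //= x.
exact: le_trans (hf x) (fg x).
Qed.

Lemma nn_scale_le (k : R) (f : R -> \bar R) : 0 < k -> (forall x, (0 <= f x)%E) ->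
  (\int[mu]_(x in setT) (k%:E * f x) <= k%:E * \int[mu]_(x in setT) f x)%E.
Proof.
move=> k0 f0.
have kf0 : forall x, (0 <= k%:E * f x)%E.
  by move=> x; apply: mule_ge0 => //; rewrite lee_fin ltW.
rewrite (ge0_integralTE mu kf0) /=.
apply: ge_ereal_sup => _ [h hf <-].
have ki0 : 0 <= k^-1 by rewrite invr_ge0 ltW.
pose h' := scale_nnsfun h ki0.
have H1 : (sintegral mu h' <= \int[mu]_(x in setT) f x)%E.
  rewrite (ge0_integralTE mu f0) /=.
  apply: ereal_sup_ubound; exists h' => //= x.
  have := hf x => hx.
  rewrite /h' /= EFinM.
  have -> : f x = (k^-1%:E * (k%:E * f x))%E.
    by rewrite muleA -EFinM mulVf ?gt_eqF // mul1e.
  by apply: lee_wpmul2l => //; rewrite lee_fin.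
have H2 : sintegral mu h' = (k^-1%:E * sintegral mu h)%E.
  by rewrite -sintegralrM.
have -> : sintegral mu h = (k%:E * sintegral mu h')%E.
  by rewrite H2 muleA -EFinM divff ?gt_eqF // mul1e.
by apply: lee_wpmul2l => //; rewrite lee_fin ltW.
Qed.

Lemma nn_scale (k : R) (f : R -> \bar R) : 0 <= k -> (forall x, (0 <= f x)%E) ->
  (\int[mu]_(x in setT) (k%:E * f x) = k%:E * \int[mu]_(x in setT) f x)%E.
Proof.
move=> k0 f0; have [->|kp] := eqVneq k 0.
  rewrite mul0e (eq_integral (fun=> 0%E)) ?integral0 // => x _.
  by rewrite mul0e.
have {kp}k0' : 0 < k by rewrite lt_def kp k0.
apply/le_anti; rewrite nn_scale_le //=.
have kf0 : forall x, (0 <= k%:E * f x)%E.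
  by move=> x; apply: mule_ge0 => //; rewrite lee_fin.
have ki : 0 < k^-1 by rewrite invr_gt0.
have := @nn_scale_le k^-1 _ ki kf0.
have E : (\int[mu]_(x in setT) (k^-1%:E * (k%:E * f x)) = \int[mu]_(x in setT) f x)%E.
  by apply: eq_integral => x _; rewrite muleA -EFinM mulVf ?gt_eqF // mul1e.
rewrite E => H.
have -> : (\int[mu]_(x in setT) (k%:E * f x) =
   k%:E * (k^-1%:E * \int[mu]_(x in setT) (k%:E * f x)))%E.
  by rewrite muleA -EFinM divff ?gt_eqF // mul1e.
by apply: lee_wpmul2l => //; rewrite lee_fin ltW.
Qed.


Definition Ie (f : R -> R) : \bar R := (\int[mu]_(x in setT) (f x)%:E)%E.

Lemma Ie_ge0 f : (forall x, 0 <= f x) -> (0 <= Ie f)%E.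
Proof. by move=> f0; apply: integral_ge0 => x _; rewrite lee_fin. Qed.

Lemma LemB (f g : R -> R) : (forall x, 0 <= f x <= g x) -> Ie g \is a fin_num ->
  Ie f \is a fin_num /\ fine (Ie f) <= fine (Ie g).
Proof.
move=> fg gfin.
have f0 : forall x, 0 <= f x by move=> x; case/andP: (fg x).
have le : (Ie f <= Ie g)%E.
  apply: nn_mono => x; rewrite lee_fin //; by case/andP: (fg x).
have ffin : Ie f \is a fin_num.
  rewrite (ge0_fin_numE (@Ie_ge0 f f0)).
  have g0 : forall x, 0 <= g x by move=> x; case/andP: (fg x) => a b; exact: le_trans a b.
  by apply: le_lt_trans le _; rewrite -ge0_fin_numE // Ie_ge0.
by split => //; apply: fine_le.
Qed.

Lemma LemC (k : R) (g : R -> R) : 0 <= k -> (forall x, 0 <= g x) ->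
  Ie (fun x => k * g x) = (k%:E * Ie g)%E.
Proof.
move=> k0 g0; by rewrite /Ie -nn_scale.
Qed.

Lemma LemC' (k : R) (g : R -> R) : 0 <= k -> (forall x, 0 <= g x) ->
  Ie g \is a fin_num ->
  Ie (fun x => k * g x) \is a fin_num /\ fine (Ie (fun x => k * g x)) = k * fine (Ie g).
Proof.
move=> k0 g0 gf; rewrite LemC // -(fineK gf) -EFinM /=; split => //.
Qed.

Lemma L3 (u : R -> R) (K e : R) : 0 <= K -> 0 < e ->
  (forall x, 0 <= u x <= K) -> (forall x, e <= `|x| -> u x = 0) ->
  Ie u \is a fin_num /\ 0 <= fine (Ie u) <= K * (e + e).
Proof.
move=> K0 e0 uK usupp.
pose A : set R := [set` `]-e, e[%R].
have mA : measurable A by exact: measurable_itv.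
pose g x : R := K * (\1_A x).
have gi : Ie (fun x => (\1_A x)) = (e + e)%:E.
  rewrite /Ie integral_indic // setIT /A.
  apply: (etrans (lebesgue_measure_itv `]-e, e[%R)).
  by rewrite /= lte_fin gtrN // opprK.
have gfin : Ie (fun x => \1_A x) \is a fin_num by rewrite gi.
have ind0 : forall x, 0 <= \1_A x :> R by move=> x; rewrite indicE.
have [gf gv] := @LemC' K _ K0 ind0 gfin.
have ug : forall x, 0 <= u x <= g x.
  move=> x; case/andP: (uK x) => u0 uk; rewrite u0 /g indicE /=.
  have [xA|xA] := boolP (x \in A); first by rewrite mulr1.
  rewrite mulr0 usupp //; rewrite leNgt; apply: contra xA => xe.
  by rewrite /A inE /= in_itv /= -ltr_norml.
have [uf ule] := @LemB u g ug gf.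
split => //; apply/andP; split.
  by apply: fine_ge0; apply: Ie_ge0 => x; case/andP: (uK x).
by apply: le_trans ule _; rewrite /g gv gi /=.
Qed.


Lemma max0_facts (x : R) : 0 <= Num.max x 0 /\ x <= Num.max x 0 /\
  (Num.max x 0 = x \/ Num.max x 0 = 0).
Proof.
rewrite /Num.max; case: ifP => h.
  by split => //; split => //; [exact: ltW|right].
by move/negbT: h; rewrite -leNgt => h; split => //; split => //; left.
Qed.

Lemma maxbounds (a b u v : R) : 0 <= u -> a * u <= v -> v <= b * u ->
  [/\ 0 <= Num.max a 0 * u <= Num.max v 0, Num.max v 0 <= Num.max b 0 * u,
      0 <= Num.max (- b) 0 * u <= Num.max (- v) 0 &
      Num.max (- v) 0 <= Num.max (- a) 0 * u].
Proof.
move=> u0 av vb.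
have [a1 [a2 a3]] := max0_facts a.
have [b1 [b2 b3]] := max0_facts b.
have [c1 [c2 c3]] := max0_facts (- a).
have [d1 [d2 d3]] := max0_facts (- b).
have [e1 [e2 e3]] := max0_facts v.
have [f1 [f2 f3]] := max0_facts (- v).
split; first (apply/andP; split); first exact: mulr_ge0.
- move: a1 a2 e1 e2; case: a3 => ->; case: e3 => ->; nra.
- move: b1 b2 e1 e2; case: b3 => ->; case: e3 => ->; nra.
- apply/andP; split; first exact: mulr_ge0.
  move: d1 d2 f1 f2; case: d3 => ->; case: f3 => ->; nra.
- move: c1 c2 f1 f2; case: c3 => ->; case: f3 => ->; nra.
Qed.

Lemma maxdiff (a : R) : Num.max a 0 - Num.max (- a) 0 = a.
Proof.
rewrite /Num.max; case: ifP => h1; case: ifP => h2; lra.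
Qed.

Lemma LemG (u v : R -> R) (a b : R) : (forall x, 0 <= u x) ->
  Ie u \is a fin_num -> (forall x, a * u x <= v x <= b * u x) ->
  a * fine (Ie u) <= fine (Ie v) <= b * fine (Ie u).
Proof.
move=> u0 uf uv.
pose vp x := Num.max (v x) 0; pose vn x := Num.max (- v x) 0.
have Iv : Ie v = (Ie vp - Ie vn)%E.
  rewrite /Ie integralE; congr (_ - _)%E; apply: eq_integral => x _.
    by rewrite funeposE /vp EFin_max.
  by rewrite funenegE /vn EFin_max EFinN.
pose ap := Num.max a 0; pose an := Num.max (- a) 0.
pose bp := Num.max b 0; pose bn := Num.max (- b) 0.
have B x := let: conj h1 h2 := andP (uv x) in @maxbounds a b (u x) (v x) (u0 x) h1 h2.
have ap0 : 0 <= ap by case: (max0_facts a).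
have an0 : 0 <= an by case: (max0_facts (- a)).
have bp0 : 0 <= bp by case: (max0_facts b).
have bn0 : 0 <= bn by case: (max0_facts (- b)).
have [bpf bpv] := @LemC' bp u bp0 u0 uf.
have [anf anv] := @LemC' an u an0 u0 uf.
have [apf apv] := @LemC' ap u ap0 u0 uf.
have [bnf bnv] := @LemC' bn u bn0 u0 uf.
have [vpf vp1] : Ie vp \is a fin_num /\ fine (Ie vp) <= fine (Ie (fun x => bp * u x)).
  apply: LemB bpf => x; case: (B x) => /andP[h1 h2] h3 _ _.
  by rewrite h3 andbT; exact: le_trans h2.
have [vnf vn1] : Ie vn \is a fin_num /\ fine (Ie vn) <= fine (Ie (fun x => an * u x)).
  apply: LemB anf => x; case: (B x) => _ _ /andP[h1 h2] h3.
  by rewrite h3 andbT; exact: le_trans h2.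
have [_ vp2] : Ie (fun x => ap * u x) \is a fin_num /\
    fine (Ie (fun x => ap * u x)) <= fine (Ie vp).
  by apply: LemB vpf => x; case: (B x) => /andP[h1 h2] _ _ _; rewrite h1 h2.
have [_ vn2] : Ie (fun x => bn * u x) \is a fin_num /\
    fine (Ie (fun x => bn * u x)) <= fine (Ie vn).
  by apply: LemB vnf => x; case: (B x) => _ _ /andP[h1 h2] _; rewrite h1 h2.
rewrite bpv in vp1; rewrite anv in vn1; rewrite apv in vp2; rewrite bnv in vn2.
have -> : fine (Ie v) = fine (Ie vp) - fine (Ie vn).
  by rewrite Iv -(fineK vpf) -(fineK vnf).
have ea : a = ap - an by rewrite maxdiff.
have eb : b = bp - bn by rewrite maxdiff.
rewrite {1}ea {1}eb; apply/andP; split; nra.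
Qed.

End IntLemmas.


Section Mx.
Variables (R : realType) (d : nat).

Lemma symD (A B : 'M[R]_d) : sym_mx A -> sym_mx B -> sym_mx (A + B).
Proof. by rewrite /sym_mx => hA hB; rewrite linearD /= hA hB. Qed.
Lemma symN (A : 'M[R]_d) : sym_mx A -> sym_mx (- A).
Proof. by rewrite /sym_mx => hA; rewrite linearN /= hA. Qed.
Lemma symZ (k : R) (A : 'M[R]_d) : sym_mx A -> sym_mx (k *: A).
Proof. by rewrite /sym_mx => hA; rewrite linearZ /= hA. Qed.
Lemma symS (k : R) : sym_mx (k%:M : 'M[R]_d).
Proof. by rewrite /sym_mx tr_scalar_mx. Qed.

Lemma sym_of_sym (c : 'I_d * 'I_d -> R) : sym_mx (sym_of c).
Proof.
apply/matrixP => i j; rewrite !mxE /=.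
case: (leqP j i) => h1; case: (leqP i j) => h2 //.
  by have -> : i = j by apply/val_inj/eqP; rewrite eqn_leq h1 h2.
by have := ltn_trans h1 h2; rewrite ltnn.
Qed.

Lemma sym_of_bound (c : 'I_d * 'I_d -> R) (e : R) :
  (forall p, p \in coords d -> `|c p| < e) -> forall i j, `|sym_of c i j| <= e.
Proof.
move=> hc i j; rewrite mxE; case: ifP => h; apply: ltW; apply: hc.
  by rewrite /coords mem_filter /= h mem_enum in_setT.
by rewrite /coords mem_filter /= mem_enum in_setT andbT ltnW // ltnNge h.
Qed.

Lemma quad_term (e q x y : R) : 0 <= e -> `|q| <= e ->
  - (e / 2) * (x ^+ 2 + y ^+ 2) <= x * q * y.
Proof.
move=> e0; rewrite ler_norml => /andP[h1 h2].
have H1 : 0 <= (e - q) * (x - y) ^+ 2 by apply: mulr_ge0; [lra|exact: sqr_ge0].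
have H2 : 0 <= (e + q) * (x + y) ^+ 2 by apply: mulr_ge0; [lra|exact: sqr_ge0].
nra.
Qed.

Lemma quad_form (A : 'M[R]_d) (v : 'cV[R]_d) :
  (v^T *m A *m v) 0 0 = \sum_k \sum_i v i 0 * A i k * v k 0.
Proof.
rewrite mxE; apply: eq_bigr => k _; rewrite mxE big_distrl /=.
by apply: eq_bigr => i _; rewrite mxE.
Qed.

Lemma psd_bound (Q : 'M[R]_d) (e : R) : sym_mx Q -> 0 <= e ->
  (forall i j, `|Q i j| <= e) -> psd ((e * d%:R)%:M + Q).
Proof.
move=> sQ e0 hQ; split; first exact: symD (symS _) sQ.
move=> v; rewrite mulmxDr mulmxDl mul_mx_scalar -scalemxAl.
rewrite mxE [X in X + _]mxE quad_form.
set S := \sum_i v i 0 ^+ 2.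
have vv : (v^T *m v) 0 0 = S.
  by rewrite mxE; apply: eq_bigr => i _; rewrite mxE expr2.
rewrite vv.
have H : \sum_k \sum_i - (e / 2) * (v i 0 ^+ 2 + v k 0 ^+ 2) <=
    \sum_k \sum_i v i 0 * Q i k * v k 0.
  by apply: ler_sum => k _; apply: ler_sum => i _; apply: quad_term.
have E : \sum_k \sum_i - (e / 2) * (v i 0 ^+ 2 + v k 0 ^+ 2) =
    - (e / 2) * (S * d%:R + S * d%:R).
  under eq_bigr => k _ do rewrite -mulr_sumr big_split /= [X in _ + X]sumr_const card_ord.
  rewrite -mulr_sumr big_split /= [X in X + _]sumr_const card_ord sumrMnl.
  by rewrite !mulr_natr.
rewrite E in H.
have S0 : 0 <= S by apply: sumr_ge0 => i _; exact: sqr_ge0.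
have -> : e * d%:R * S = (e / 2) * (S * d%:R + S * d%:R).
  by field.
by rewrite mulNr -subr_ge0 opprK addrC in H.
Qed.

End Mx.
Arguments symD {R d}. Arguments symN {R d}. Arguments symZ {R d}. Arguments symS {R d}.
Arguments sym_of_sym {R d}. Arguments sym_of_bound {R d}. Arguments psd_bound {R d}.



Section Main.
Variables (R : realType) (d : nat) (eps : R).
Hypothesis eps0 : 0 < eps.

Lemma iint_ge0 s (f : ('I_d * 'I_d -> R) -> R) c :
  (forall c, 0 <= f c) -> 0 <= iint s f c.
Proof.
move=> f0; elim: s c => [|p s IH] c /=; first exact: f0.
by apply: fine_ge0; apply: integral_ge0 => x _; rewrite lee_fin IH.
Qed.

Lemma phi_bounds (c : 'I_d * 'I_d -> R) : 0 <= phi_std c <= 1.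
Proof.
rewrite /phi_std; case: ifP => h; last by rewrite lexx ler01.
rewrite expR_ge0 expR_le1 invr_le0 /=.
have n0 : 0 <= enorm c by rewrite /enorm sqrtr_ge0.
nra.
Qed.

Definition Z := integral_Rdstar (@phi_std R d).
Definition Kc := (eps ^+ size (coords d))^-1 * Z^-1.

Lemma Z_ge0 : 0 <= Z.
Proof. by apply: iint_ge0 => c; case/andP: (phi_bounds c). Qed.

Lemma eta_bounds (c : 'I_d * 'I_d -> R) : 0 <= Defs.eta eps c <= Kc.
Proof.
rewrite /eta /eta_std /Kc.
have e0 : 0 <= (eps ^+ size (coords d))^-1 by rewrite invr_ge0 exprn_ge0 // ltW.
have z0 : 0 <= Z^-1 by rewrite invr_ge0 Z_ge0.
have [p0 p1] := andP (phi_bounds (fun p => c p / eps)).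
apply/andP; split; first by apply: mulr_ge0 => //; apply: mulr_ge0.
apply: ler_wpM2l => //; rewrite -/Z.
by rewrite -[X in _ <= X]mul1r; apply: ler_wpM2r.
Qed.

Lemma eta_supp (c : 'I_d * 'I_d -> R) p : p \in coords d -> eps <= `|c p| -> Defs.eta eps c = 0.
Proof.
move=> pc hp.
rewrite /Defs.eta /eta_std -/Z [phi_std _]/phi_std ifN ?mul0r ?mulr0 //.
rewrite -leNgt /enorm -sqrtr1 ler_sqrt; last first.
  by apply: sumr_ge0 => q _; exact: sqr_ge0.
rewrite (big_rem p) //=.
have h1 : 1 <= `|c p / eps|.
  by rewrite normrM normfV (gtr0_norm eps0) ler_pdivlMr // mul1r.
have h2 : 1 <= (c p / eps) ^+ 2.
  by rewrite -real_normK ?num_real //; nra.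
have h3 : 0 <= \sum_(y <- rem p (coords d)) (c y / eps) ^+ 2.
  by apply: sumr_ge0 => q _; exact: sqr_ge0.
lra.
Qed.

Definition psi s (c : 'I_d * 'I_d -> R) := iint s (Defs.eta eps) c.

Lemma upd_same (c : 'I_d * 'I_d -> R) p x : upd c p x p = x.
Proof. by rewrite /upd eqxx. Qed.

Lemma upd_other (c : 'I_d * 'I_d -> R) p x q : q != p -> upd c p x q = c q.
Proof. by rewrite /upd => /negbTE ->. Qed.

Lemma claimA (s : seq ('I_d * 'I_d)) : uniq s -> {subset s <= coords d} -> forall c,
  (0 <= psi s c <= Kc * (eps + eps) ^+ size s) /\
  (forall q, q \in coords d -> q \notin s -> eps <= `|c q| -> psi s c = 0).
Proof.
elim: s => [|p s IH] us ss c.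
  split; first by rewrite expr0 mulr1; exact: eta_bounds.
  by move=> q qc _ hq; exact: eta_supp qc hq.
move: us => /= /andP[pns us].
have ss' : {subset s <= coords d} by move=> q qs; apply: ss; rewrite inE qs orbT.
have pc : p \in coords d by apply: ss; rewrite inE eqxx.
have K0 : 0 <= Kc * (eps + eps) ^+ size s.
  by case/andP: (proj1 (IH us ss' c)) => h1 h2; exact: le_trans h2.
have hs : forall x, eps <= `|x| -> psi s (upd c p x) = 0.
  by move=> x hx; apply: ((proj2 (IH us ss' (upd c p x))) p pc pns); rewrite upd_same.
have [uf ub] := @L3 R (fun x => psi s (upd c p x)) _ eps K0 eps0
  (fun x => proj1 (IH us ss' (upd c p x))) hs.
split.
  rewrite /psi /= -/(psi s _); move: ub; rewrite /Ie /Rintegral exprS.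
  by rewrite [(eps + eps) * _]mulrC mulrA.
move=> q qc; rewrite inE negb_or => /andP[qp qs] hq.
rewrite /psi /= /Rintegral.
rewrite (eq_integral (fun _ => 0%E)) ?integral0 // => x _.
have := (proj2 (IH us ss' (upd c p x))) q qc qs.
by rewrite /psi upd_other // => ->.
Qed.


Lemma coords_uniq : uniq (coords d).
Proof. by rewrite /coords filter_uniq // enum_uniq. Qed.

Lemma claimB (h : ('I_d * 'I_d -> R) -> R) (a b : R) :
  (forall c, a * Defs.eta eps c <= h c <= b * Defs.eta eps c) ->
  forall s : seq ('I_d * 'I_d), uniq s -> {subset s <= coords d} ->
  forall c, a * psi s c <= iint s h c <= b * psi s c.
Proof.
move=> hab; elim=> [|p s IH] us ss c; first exact: hab.
move: us => /= /andP[pns us].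
have ss' : {subset s <= coords d} by move=> q qs; apply: ss; rewrite inE qs orbT.
have pc : p \in coords d by apply: ss; rewrite inE eqxx.
have K0 : 0 <= Kc * (eps + eps) ^+ size s.
  by case/andP: (proj1 (@claimA s us ss' c)) => h1 h2; exact: le_trans h2.
have hs : forall x, eps <= `|x| -> psi s (upd c p x) = 0.
  by move=> x hx; apply: ((proj2 (@claimA s us ss' (upd c p x))) p pc pns); rewrite upd_same.
have [uf ub] := @L3 R (fun x => psi s (upd c p x)) _ eps K0 eps0
  (fun x => proj1 (@claimA s us ss' (upd c p x))) hs.
apply: (@LemG R (fun x => psi s (upd c p x)) (fun x => iint s h (upd c p x))) => //.
  by move=> x; case/andP: (proj1 (@claimA s us ss' (upd c p x))).
by move=> x; exact: IH.
Qed.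

End Main.

Theorem proposition3p2 (R : realType) (d : nat) (nrm : 'M[R]_d -> R)
  (lam Lam : R) (F : 'M[R]_d -> R) :
  is_matrix_norm nrm ->
  0 < lam -> lam <= Lam ->
  (forall M N : 'M[R]_d, sym_mx M -> psd N ->
     lam * nrm N <= F (M + N) - F M /\ F (M + N) - F M <= Lam * nrm N) ->
  F 0 = 0 ->
  recession_profile_convex F ->
  forall eps : R, 0 < eps -> recession_profile_convex (mollify F eps).
Proof.
move=> [nrm0 _ _ _] lam0 lamLam hF _ [Fs [hlim hconv]] eps eps0.
pose I0 := @psi R d eps (coords d) (fun _ => 0).
have I00 : 0 <= I0.
  by case/andP: (proj1 (@claimA R d eps eps0 (coords d) (coords_uniq d) (fun q h => h) (fun _ => 0))).
exists (fun M => I0 * Fs M); split; last first.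
  move=> A B t sA sB ht; have H := hconv A B t sA sB ht.
  rewrite mulrCA [(1 - t) * _]mulrCA -mulrDr; exact: ler_wpM2l.
move=> M sM.
pose T := eps * d%:R.
pose C := Lam * nrm (T%:M).
have sym0 : sym_mx (0 : 'M[R]_d) by rewrite /sym_mx trmx0.
have psdT : psd (T%:M : 'M[R]_d).
  have := @psd_bound R d 0 eps sym0 (ltW eps0).
  by rewrite addr0; apply => i j; rewrite mxE normr0 ltW.
have key : forall X, sym_mx X ->
    I0 * (F X - C) <= mollify F eps X <= I0 * (F X + C).
  move=> X sX.
  rewrite [I0 * _]mulrC [I0 * (F X + C)]mulrC.
  apply: (@claimB R d eps eps0 (fun c => F (X - sym_of c) * Defs.eta eps c))
    => //; last exact: coords_uniq.
  move=> c.
  have [e0|en0] := eqVneq (Defs.eta eps c) 0.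
    by rewrite e0 !mulr0 lexx.
  have [et0 _] := andP (@eta_bounds R d eps eps0 c).
  have etp : 0 < Defs.eta eps c by rewrite lt_def en0 et0.
  have cb : forall p, p \in coords d -> `|c p| < eps.
    move=> p pc; rewrite ltNge; apply/negP => hp.
    by move: en0; rewrite (@eta_supp R d eps eps0 c _ pc hp) eqxx.
  set Q := sym_of c.
  have sQ : sym_mx Q := sym_of_sym c.
  have bQ := sym_of_bound _ _ cb.
  have psd1 : psd (T%:M + Q) := psd_bound _ _ sQ (ltW eps0) bQ.
  have psd2 : psd (T%:M - Q).
    apply: (psd_bound _ _ (symN _ sQ) (ltW eps0)) => i j.
    by rewrite mxE normrN.
  have sXT : sym_mx (X - T%:M) by apply: symD => //; apply: symN; apply: symS.
  have sXQ : sym_mx (X - Q) by apply: symD => //; apply: symN.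
  have [_ h1] := hF _ _ sXT psdT.
  rewrite subrK in h1.
  have [h2 _] := hF _ _ sXT psd2.
  rewrite addrA subrK in h2.
  have [_ h3] := hF _ _ sX psdT.
  have [h4 _] := hF _ _ sXQ psd1.
  rewrite [T%:M + Q]addrC addrA subrK in h4.
  have n1 := nrm0 (T%:M - Q).
  have n2 := nrm0 (Q + T%:M).
  have m1 := mulr_ge0 (ltW lam0) n1.
  have m2 := mulr_ge0 (ltW lam0) n2.
  rewrite /C; apply/andP; split; apply: ler_wpM2r => //.
  lra. lra.
rewrite /recession_limit.
have H : \forall mu \near ((0:R)^'+)%classic,
    I0 * (mu * F (mu^-1 *: M)) - I0 * (mu * C) <=
    mu * mollify F eps (mu^-1 *: M) <=
    I0 * (mu * F (mu^-1 *: M)) + I0 * (mu * C).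
  near=> mu.
  have mu0 : 0 < mu by near: mu; exact: nbhs_right_gt.
  have /andP[k1 k2] := key _ (symZ mu^-1 _ sM).
  have k1' := ler_wpM2l (ltW mu0) k1.
  have k2' := ler_wpM2l (ltW mu0) k2.
  apply/andP; split; lra.
have L1 := hlim M sM.
have L2 : ((fun mu : R => mu) @ ((0:R)^'+) --> (0:R))%classic.
  exact: cvg_at_right_filter cvg_id.
have L3 : ((fun mu : R => I0 * (mu * C)) @ ((0:R)^'+) --> I0 * (0 * C))%classic.
  apply: cvgM; first exact: cvg_cst.
  by apply: cvgM => //; exact: cvg_cst.
have L4 : ((fun mu : R => I0 * (mu * F (mu^-1 *: M))) @ ((0:R)^'+) --> I0 * Fs M)%classic.
  by apply: cvgM => //; exact: cvg_cst.
rewrite mul0r mulr0 in L3.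
have Llo := cvgB L4 L3.
have Lup := cvgD L4 L3.
rewrite subr0 in Llo; rewrite addr0 in Lup.
apply: (squeeze_cvgr H).
  exact: Llo.
exact: Lup.
Unshelve. all: by end_near.
Qed.
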